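(* Let $(\mathbb{C},\mathcal{N})$ be a star-regular category satisfying property $( * )$. Let $F^*\rightrightarrows A$ and $G^*\rightrightarrows A$ be kernel stars with $F^*\subseteq G^*$, with coequalisers $f\colon A\to A/F^*$ and $g\colon A\to A/G^*$. Then $f(G^* )\rightrightarrows A/F^*$ is a kernel star, the unique morphism $q\colon A/F^*\to A/G^*$ with $qf=g$ is a coequaliser of $f(G^* )$, and hence $$A/G^*\;\cong\;\frac{A/F^*}{f(G^* )}.$$
   Context: Throughout, $\mathbb{C}$ is a finitely complete regular category with an ideal of morphisms $\mathcal{N}$ (a class such that $gf\in\mathcal{N}$ whenever $f\in\mathcal{N}$ or $g\in\mathcal{N}$). A star on $X$ is a pair of parallel morphisms $\tau=(\tau_1,\tau_2)\colon T\rightrightarrows X$ with $\tau_1\in\mathcal{N}$; monic if jointly monic. For stars $\sigma\colon S\rightrightarrows X$, $\tau\colon T\rightrightarrows X$, write $S\subseteq T$ if there is $h\colon S\to T$ with $\tau_ih=\sigma_i$. An $\mathcal{N}$-kernel of $f$ is a morphism $k$ into its domain with $fk\in\mathcal{N}$, universal with this property. For a relation $\rho=(\rho_1,\rho_2)$, $\rho^*=(\rho_1k,\rho_2k)$ with $k$ the $\mathcal{N}$-kernel of $\rho_1$. The kernel star of $f\colon X\to Y$ (capital letter $F^*$) is $Eq(f)^*$ for $Eq(f)$ the kernel pair of $f$; a kernel star on $X$ is the kernel star of some morphism with domain $X$. Every star factors uniquely up to isomorphism as a regular epimorphism followed by a monic star; for $f\colon X\to Y$ and a star $\lambda$ on $X$,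 $f(\lambda)$ is the monic star part of the factorisation of $(f\lambda_1,f\lambda_2)$. A star-regular category is a regular multi-pointed category with $\mathcal{N}$-kernels in which every regular epimorphism is a coequaliser of some star; there every kernel star $F^*$ on $A$ has a coequaliser $A\to A/F^*$, and $X/S$ denotes the codomain of the coequaliser of a star $S$ on $X$. Property $( * )$: for every kernel star $F^*\rightrightarrows A$ with coequaliser $f$ and every kernel star $G^*\rightrightarrows A$ with $F^*\subseteq G^*$, the star $f(G^* )\rightrightarrows A/F^*$ is a kernel star. *)

(* Defs.v *)
Set Implicit Arguments.
Unset Strict Implicit.

Record Cat := {
  Ob :> Type;
  Hom : Ob -> Ob -> Type;
  cid : forall X, Hom X X;
  comp : forall X Y Z, Hom Y Z -> Hom X Y -> Hom X Z;
  comp_id_l : forall X Y (f : Hom X Y), comp (cid Y) f = f;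
  comp_id_r : forall X Y (f : Hom X Y), comp f (cid X) = f;
  comp_assoc : forall X Y Z W (f : Hom X Y) (g : Hom Y Z) (h : Hom Z W),
      comp h (comp g f) = comp (comp h g) f
}.
Arguments Hom {c} X Y.
Arguments cid {c} X.
Arguments comp {c X Y Z} g f.
Notation "g \o f" := (comp g f) (at level 40, left associativity).

Section CatDefs.
Variable C : Cat.

Definition MorClass := forall (X Y : C), Hom X Y -> Prop.

Definition is_iso {X Y : C} (f : Hom X Y) : Prop :=
  exists g : Hom Y X, g \o f = cid X /\ f \o g = cid Y.

Definition is_terminal (T : C) : Prop :=
  forall X : C, exists! u : Hom X T, True.

Definition is_pullback {X Y Z P : C} (f : Hom X Z) (g : Hom Y Z)
  (p1 : Hom P X) (p2 : Hom P Y) : Prop :=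
  f \o p1 = g \o p2 /\
  forall (W : C) (a : Hom W X) (b : Hom W Y), f \o a = g \o b ->
    exists! u : Hom W P, p1 \o u = a /\ p2 \o u = b.

Definition is_kernel_pair {X Y P : C} (f : Hom X Y) (p1 p2 : Hom P X) : Prop :=
  is_pullback f f p1 p2.

Definition is_coequaliser {R X Q : C} (a b : Hom R X) (q : Hom X Q) : Prop :=
  q \o a = q \o b /\
  forall (W : C) (h : Hom X W), h \o a = h \o b ->
    exists! u : Hom Q W, u \o q = h.

Definition is_regular_epi {X Q : C} (e : Hom X Q) : Prop :=
  exists (R : C) (a b : Hom R X), is_coequaliser a b e.

Definition jointly_monic {T X : C} (a b : Hom T X) : Prop :=
  forall (W : C) (u v : Hom W T), a \o u = a \o v -> b \o u = b \o v -> u = v.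

Definition finitely_complete : Prop :=
  (exists T : C, is_terminal T) /\
  forall (X Y Z : C) (f : Hom X Z) (g : Hom Y Z),
    exists (P : C) (p1 : Hom P X) (p2 : Hom P Y), is_pullback f g p1 p2.

Definition is_regular : Prop :=
  finitely_complete /\
  (forall (X Y P : C) (f : Hom X Y) (p1 p2 : Hom P X), is_kernel_pair f p1 p2 ->
     exists (Q : C) (q : Hom X Q), is_coequaliser p1 p2 q) /\
  (forall (X Y Z P : C) (e : Hom X Z) (g : Hom Y Z) (p1 : Hom P X) (p2 : Hom P Y),
     is_regular_epi e -> is_pullback e g p1 p2 -> is_regular_epi p2).

Variable N : MorClass.

Definition is_ideal : Prop :=
  forall (X Y Z : C) (f : Hom X Y) (g : Hom Y Z), (N f \/ N g) -> N (g \o f).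


Definition is_Nkernel {X Y K : C} (f : Hom X Y) (k : Hom K X) : Prop :=
  N (f \o k) /\
  forall (W : C) (h : Hom W X), N (f \o h) -> exists! u : Hom W K, k \o u = h.

Definition has_Nkernels : Prop :=
  forall (X Y : C) (f : Hom X Y), exists (K : C) (k : Hom K X), is_Nkernel f k.

Record star (X : C) := Star {
  sdom : C;
  s1 : Hom sdom X;
  s2 : Hom sdom X;
  s1N : N s1
}.

Definition monic_star {X : C} (S : star X) : Prop := jointly_monic (s1 S) (s2 S).

Definition star_sub {X : C} (S T : star X) : Prop :=
  exists h : Hom (sdom S) (sdom T), s1 T \o h = s1 S /\ s2 T \o h = s2 S.

(* S is (a representative of) the kernel star F^* = Eq(f)^* of f. *)
Definition is_kernel_star_of {X Y : C} (f : Hom X Y) (S : star X) : Prop :=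
  exists (P : C) (p1 p2 : Hom P X) (k : Hom (sdom S) P),
    is_kernel_pair f p1 p2 /\ is_Nkernel p1 k /\
    s1 S = p1 \o k /\ s2 S = p2 \o k.

Definition is_kernel_star {X : C} (S : star X) : Prop :=
  exists (Y : C) (f : Hom X Y), is_kernel_star_of f S.

(* M is (a representative of) f(L): the monic-star part of the
   (regular epi, monic star) factorisation of (f L1, f L2). *)
Definition is_star_image {X Y : C} (f : Hom X Y) (L : star X) (M : star Y) : Prop :=
  monic_star M /\
  exists e : Hom (sdom L) (sdom M),
    is_regular_epi e /\ s1 M \o e = f \o s1 L /\ s2 M \o e = f \o s2 L.

(* Regular multi-pointed category (Gran-Janelidze-Ursini): C regular, N an
   ideal, and N closed under regular images (g e in N, e regular epi => g in N). *)
Definition regular_multi_pointed : Prop :=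
  is_regular /\ is_ideal /\
  (forall (X Y Z : C) (e : Hom X Y) (g : Hom Y Z),
     is_regular_epi e -> N (g \o e) -> N g).

Definition star_regular : Prop :=
  regular_multi_pointed /\ has_Nkernels /\
  forall (X Q : C) (e : Hom X Q), is_regular_epi e ->
    exists S : star X, is_coequaliser (s1 S) (s2 S) e.

Definition property_star : Prop :=
  forall (A AF : C) (F G : star A) (f : Hom A AF),
    is_kernel_star F -> is_kernel_star G -> star_sub F G ->
    is_coequaliser (s1 F) (s2 F) f ->
    forall M : star AF, is_star_image f G M -> is_kernel_star M.

End CatDefs.

(* Main.v *)
Require Import Defs.

Section Aux.
Variable C : Cat.

Lemma coeq_epi (R X Q : C) (a b : Hom R X) (q : Hom X Q) :
  is_coequaliser a b q -> forall W (u v : Hom Q W), u \o q = v \o q -> u = v.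
Proof.
  intros [Hq Hu] W u v E.
  destruct (Hu W (u \o q)) as [w [_ Hw]].
  { rewrite <- !comp_assoc, Hq. reflexivity. }
  transitivity w; [symmetry|]; apply Hw; auto.
Qed.

Lemma regepi_epi (X Q : C) (q : Hom X Q) :
  is_regular_epi q -> forall W (u v : Hom Q W), u \o q = v \o q -> u = v.
Proof. intros [R [a [b H]]]. eapply coeq_epi; eauto. Qed.

Lemma image_exists (reg : is_regular C) (X Y : C) (h1 h2 : Hom X Y) :
  exists (I : C) (e : Hom X I) (m1 m2 : Hom I Y),
    is_regular_epi e /\ m1 \o e = h1 /\ m2 \o e = h2 /\ jointly_monic m1 m2.
Proof.
  destruct reg as [[[T HT] PB] [KP STAB]].
  destruct (HT Y) as [t [_ _]].
  assert (Tu : forall Z (x y : Hom Z T), x = y).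
  { intros Z x y. destruct (HT Z) as [w [_ Hw]].
    transitivity w; [symmetry|]; apply Hw; auto. }
  destruct (PB Y Y T t t) as [P [p1 [p2 [Hsq HP]]]].
  destruct (HP X h1 h2 (Tu _ _ _)) as [h [[Hh1 Hh2] _]].
  destruct (PB X X P h h) as [K [k1 [k2 HK]]].
  destruct (KP X P K h k1 k2 HK) as [I [e He]].
  destruct He as [He1 He2].
  destruct (He2 P h (proj1 HK)) as [m [Hm _]].
  exists I, e, (p1 \o m), (p2 \o m).
  split; [exists K, k1, k2; split; auto|].
  split; [rewrite <- comp_assoc, Hm; auto|].
  split; [rewrite <- comp_assoc, Hm; auto|].
  intros W u v E1 E2.
  assert (Emuv : m \o u = m \o v).
  { destruct (HP W (p1 \o m \o u) (p2 \o m \o u)) as [z [_ Hz]].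
    { apply Tu. }
    transitivity z; [symmetry|]; apply Hz; rewrite !comp_assoc; auto. }
  assert (Hre : is_regular_epi e) by (exists K, k1, k2; split; auto).
  destruct (PB X W I e u) as [W1 [a [e1 Hpb1]]].
  pose proof (STAB _ _ _ _ _ _ _ _ Hre Hpb1) as Re1.
  destruct Hpb1 as [Hsq1 _].
  destruct (PB X W1 I e (v \o e1)) as [W2 [b [e2 Hpb2]]].
  pose proof (STAB _ _ _ _ _ _ _ _ Hre Hpb2) as Re2.
  destruct Hpb2 as [Hsq2 _].
  destruct (proj2 HK W2 (a \o e2) b) as [s [[Hs1 Hs2] _]].
  { rewrite <- Hm. rewrite <- !comp_assoc. rewrite (comp_assoc e2 a e), Hsq1.
    rewrite Hsq2. rewrite !comp_assoc. rewrite Emuv. reflexivity. }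
  eapply regepi_epi; [exact Re1|]. eapply regepi_epi; [exact Re2|].
  rewrite <- Hsq1, <- comp_assoc, <- Hs1, comp_assoc, He1, <- comp_assoc, Hs2, Hsq2.
  reflexivity.
Qed.

End Aux.

Theorem proposition2p11 (C : Cat) (N : MorClass C)
  (HSR : star_regular N) (Hstar : property_star N)
  (A AF AG : C) (F G : star N A)
  (HF : is_kernel_star F) (HG : is_kernel_star G) (HFG : star_sub F G)
  (f : Hom A AF) (g : Hom A AG)
  (Hf : is_coequaliser (s1 F) (s2 F) f) (Hg : is_coequaliser (s1 G) (s2 G) g) :
  (exists M : star N AF, is_star_image f G M) /\
  (exists! q : Hom AF AG, q \o f = g) /\
  forall M : star N AF, is_star_image f G M ->
    is_kernel_star M /\
    (forall q : Hom AF AG, q \o f = g -> is_coequaliser (s1 M) (s2 M) q) /\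
    (forall (Q : C) (c : Hom AF Q), is_coequaliser (s1 M) (s2 M) c ->
       exists i : Hom Q AG, is_iso i /\ i \o c \o f = g).
Proof.
  destruct HSR as [[Hreg [Hid Hcl]] _].
  split.
  { destruct (@image_exists C Hreg _ _ (f \o s1 G) (f \o s2 G)) as [I [e [m1 [m2 [Re [E1 [E2 Jm]]]]]]].
    assert (Nm1 : N _ _ m1).
    { apply (Hcl _ _ _ e m1 Re). rewrite E1. apply Hid. left. apply s1N. }
    exists (@Star C N AF I m1 m2 Nm1). split; [exact Jm|].
    exists e. simpl. auto. }
  split.
  { destruct HFG as [k [Hk1 Hk2]].
    destruct Hf as [_ Hfu].
    destruct (Hfu AG g) as [q [Hq Hqu]].
    { rewrite <- Hk1, <- Hk2, !comp_assoc, (proj1 Hg). reflexivity. }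
    exists q. split; auto. }
  intros M HM.
  split; [exact (Hstar A AF F G f HF HG HFG Hf M HM)|].
  destruct HM as [_ [e [Re [E1 E2]]]].
  assert (Hcq : forall q : Hom AF AG, q \o f = g -> is_coequaliser (s1 M) (s2 M) q).
  { intros q Hq. split.
    - eapply regepi_epi; [exact Re|]. rewrite <- !comp_assoc, E1, E2, !comp_assoc, Hq.
      exact (proj1 Hg).
    - intros W h Hh.
      destruct (proj2 Hg W (h \o f)) as [u [Hu Huu]].
      { rewrite <- !comp_assoc, <- E1, <- E2, !comp_assoc, Hh. reflexivity. }
      exists u. split.
      + eapply coeq_epi; [exact Hf|]. rewrite <- comp_assoc, Hq. exact Hu.
      + intros u' Hu'. apply Huu. rewrite <- Hq, comp_assoc, Hu'. reflexivity. }
  split; [exact Hcq|].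
  intros Q c Hc.
  destruct (proj2 Hf AG g) as [q [Hq _]].
  { destruct HFG as [k [Hk1 Hk2]].
    rewrite <- Hk1, <- Hk2, !comp_assoc, (proj1 Hg). reflexivity. }
  pose proof (Hcq q Hq) as Hqc.
  destruct (proj2 Hc AG q (proj1 Hqc)) as [i [Hi _]].
  destruct (proj2 Hqc Q c (proj1 Hc)) as [j [Hj _]].
  exists i. split.
  - exists j. split.
    + eapply coeq_epi; [exact Hc|]. rewrite <- comp_assoc, Hi, Hj, comp_id_l. reflexivity.
    + eapply coeq_epi; [exact Hqc|]. rewrite <- comp_assoc, Hj, Hi, comp_id_l. reflexivity.
  - rewrite Hi. exact Hq.
Qed.
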